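(* Let $\Omega\subseteq\mathcal{A}_n$ be a closed set which is uniformly transversally star-shaped with respect to $S\in\mathcal{A}_n$. Then for every compact set $K\subseteq\mathcal{A}_n$, $\sup\langle n,S-R\rangle<0,$ where the supremum is taken over all $R\in K\cap\partial\Omega$ and all $n\in\mathcal{A}_n$ with $\|n\|=1$ and $\langle n,v\rangle\le0$ for all $v\in T_R\Omega$.
   Context: $\mathcal{A}_n$ is the (finite-dimensional Euclidean) space of algebraic curvature tensors on $\mathbb{R}^n$, with scalar product $\langle R,S\rangle=\mathrm{tr}(R\circ S)$. Tangent cone: $T_R\Omega:=\overline{\{\dot\gamma(0)\mid\gamma:(-\epsilon,\epsilon)\to\mathcal{A}_n\ \mathcal C^1,\ \gamma(0)=R,\ \gamma(t)\in\Omega\ \forall t\in[0,\epsilon)\}}$. A closed $\Omega$ is uniformly transversally star-shaped with respect to $S$ if for every compact $K\subseteq\mathcal{A}_n$ there is $r>0$ such that for every $R\in K\cap\partial\Omega$ there is $\varepsilon_0>0$ with $R+\varepsilon B_r(S-R)\subseteq\Omega$ for all $\varepsilon\in[0,\varepsilon_0)$, $B_r(v)$ the open ball of radius $r$ around $v$. *)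

(* Defs.v *)
From HB Require Import structures.
From mathcomp Require Import all_boot all_order all_algebra.
From mathcomp Require Import all_classical all_reals all_analysis.
Set Implicit Arguments. Unset Strict Implicit. Unset Printing Implicit Defensive.
Import Order.TTheory GRing.Theory Num.Theory.
Import numFieldNormedType.Exports.
Local Open Scope classical_set_scope.
Local Open Scope ring_scope.

(* Ambient space: 4-tensors on R^n, stored as (n*n) x (n*n) matrices,
   entry T_{ijkl} := T (mxvec_index i j) (mxvec_index k l). *)
Definition tens (K : realType) (n : nat) := 'M[K]_(n * n, n * n).

Definition tc {K : realType} {n : nat} (T : tens K n) (i j k l : 'I_n) : K :=
  T (mxvec_index i j) (mxvec_index k l).

Definition ACT (K : realType) (n : nat) : set (tens K n) :=
  [set T | forall i j k l : 'I_n,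
     [/\ tc T i j k l = - tc T j i k l,
         tc T i j k l = - tc T i j l k,
         tc T i j k l = tc T k l i j &
         tc T i j k l + tc T j k i l + tc T k i j l = 0]].
Arguments ACT K n : clear implicits.

(* <R,S> = tr(R o S), R,S viewed as operators on Lambda^2 R^n
   (orthonormal basis e_i /\ e_j, i<j): equals 1/4 sum_{ijkl} R_ijkl S_ijkl. *)
Definition ip {K : realType} {n : nat} (T U : tens K n) : K :=
  4^-1 * \sum_(i < n) \sum_(j < n) \sum_(k < n) \sum_(l < n) tc T i j k l * tc U i j k l.

Definition nrm {K : realType} {n : nat} (T : tens K n) : K := Num.sqrt (ip T T).

Definition rbd {K : realType} {n : nat} (Om : set (tens K n)) : set (tens K n) :=
  [set R | ACT K n R /\ closure Om R /\
     forall e : K, 0 < e -> exists X, [/\ ACT K n X, nrm (X - R) < e & ~ Om X]].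

Definition curve_velocities {K : realType} {n : nat} (Om : set (tens K n)) (R : tens K n)
  : set (tens K n) :=
  [set v | exists (g : K -> tens K n) (eps : K), [/\ 0 < eps /\ g 0 = R, v = 'D_1 g 0,
      (forall t, (- eps < t < eps) -> ACT K n (g t)),
      (forall t, (0 <= t < eps) -> Om (g t)) &
      (forall t, (- eps < t < eps) -> derivable g t 1 /\ {for t, continuous ('D_1 g)})]].

Definition tcone {K : realType} {n : nat} (Om : set (tens K n)) (R : tens K n) : set (tens K n) :=
  closure (curve_velocities Om R).

Definition aball {K : realType} {n : nat} (r : K) (v : tens K n) : set (tens K n) :=
  [set w | ACT K n w /\ nrm (w - v) < r].

Definition uniformly_transversally_star_shaped {K : realType} {n : nat}
  (Om : set (tens K n)) (S : tens K n) : Prop :=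
  forall Kc : set (tens K n), Kc `<=` ACT K n -> compact Kc ->
  exists r : K, 0 < r /\
    forall R, Kc R -> rbd Om R ->
    exists eps0 : K, 0 < eps0 /\
      forall eps : K, (0 <= eps < eps0) ->
        forall w, aball r (S - R) w -> Om (R + eps *: w).

(* Main.v *)
Require Import Defs.
From HB Require Import structures.
From mathcomp Require Import all_boot all_order all_algebra.
From mathcomp Require Import all_classical all_reals all_analysis.
Import Order.TTheory GRing.Theory Num.Theory.
Import numFieldNormedType.Exports.
Local Open Scope classical_set_scope.
Local Open Scope ring_scope.

Lemma lin_D (K : realType) (n : nat) (R w : tens K n) (t : K) :
  differentiable (fun s : K => R + s *: w) t /\ 'D_1 (fun s : K => R + s *: w) t = w.
Proof.
have H : is_diff t (cst R + ( *:%R ^~ w) : K -> tens K n) (0 + ( *:%R ^~ w)).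
  exact: is_diffD.
have -> : (fun s : K => R + s *: w) = (cst R + ( *:%R ^~ w) : K -> tens K n) by [].
split; first exact: ex_diff.
rewrite deriveE; last exact: ex_diff.
rewrite diff_val /=. by rewrite add0r scale1r.
Qed.

From mathcomp Require Import ring lra.

Lemma ACT_add (K : realType) (n : nat) (U V : tens K n) :
  ACT K n U -> ACT K n V -> ACT K n (U + V).
Proof.
move=> hU hV i j k l.
have [h1 h2 h3 h4] := hU i j k l; have [g1 g2 g3 g4] := hV i j k l.
move: h1 h2 h3 h4 g1 g2 g3 g4; rewrite /tc !mxE => h1 h2 h3 h4 g1 g2 g3 g4.
split; lra.
Qed.

Lemma ACT_scale (K : realType) (n : nat) (a : K) (U : tens K n) :
  ACT K n U -> ACT K n (a *: U).
Proof.
move=> hU i j k l.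
have [h1 h2 h3 h4] := hU i j k l.
move: h1 h2 h3 h4; rewrite /tc !mxE => h1 h2 h3 h4.
split.
- by rewrite h1 mulrN.
- by rewrite h2 mulrN.
- by rewrite h3.
- by rewrite -!mulrDr h4 mulr0.
Qed.

Lemma ip_lin (K : realType) (n : nat) (T U V : tens K n) (a : K) :
  ip T (a *: U + V) = a * ip T U + ip T V.
Proof.
rewrite /ip mulrCA -mulrDr; congr (_ * _).
rewrite big_distrr -big_split; apply: eq_bigr => i _.
rewrite big_distrr -big_split; apply: eq_bigr => j _.
rewrite big_distrr -big_split; apply: eq_bigr => k _.
rewrite big_distrr -big_split; apply: eq_bigr => l _.
rewrite /tc !mxE /=; ring.
Qed.

Lemma ip_scale2 (K : realType) (n : nat) (T : tens K n) (a : K) :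
  ip (a *: T) (a *: T) = a ^+ 2 * ip T T.
Proof.
rewrite /ip mulrCA; congr (_ * _).
rewrite big_distrr; apply: eq_bigr => i _.
rewrite big_distrr; apply: eq_bigr => j _.
rewrite big_distrr; apply: eq_bigr => k _.
rewrite big_distrr; apply: eq_bigr => l _.
rewrite /tc !mxE /=; ring.
Qed.

Lemma ip_ge0 (K : realType) (n : nat) (T : tens K n) : 0 <= ip T T.
Proof.
apply: mulr_ge0; first by rewrite invr_ge0.
do 4 (apply: sumr_ge0 => ? _).
exact: sqr_ge0.
Qed.

Theorem lemma4p7 (K : realType) (n : nat) (Om : set (tens K n)) (S : tens K n) :
  Om `<=` ACT K n -> closed Om -> ACT K n S ->
  uniformly_transversally_star_shaped Om S ->
  forall Kc : set (tens K n), Kc `<=` ACT K n -> compact Kc ->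
  exists c : K, 0 < c /\
    forall R N : tens K n, Kc R -> rbd Om R ->
      ACT K n N -> nrm N = 1 ->
      (forall v, tcone Om R v -> ip N v <= 0) ->
      ip N (S - R) <= - c.
Proof.
move=> OmA _ AS ust Kc KcA cKc.
have [r [r0 Hr]] := ust Kc KcA cKc.
exists (r / 2); split; first by rewrite divr_gt0.
move=> R N KR bR AN N1 Htc.
have AR : ACT K n R := bR.1.
have NN : ip N N = 1.
  by rewrite -(sqr_sqrtr (@ip_ge0 K n N)) -/(nrm N) N1 expr1n.
have [eps0 [e0 He]] := Hr R KR bR.
set w := (S - R) + (r / 2) *: N.
have Aw : ACT K n w.
  rewrite /w; apply: ACT_add; last exact: ACT_scale.
  apply: ACT_add => //; rewrite -scaleN1r; exact: ACT_scale.
have bw : aball r (S - R) w.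
  split => //.
  have -> : w - (S - R) = (r / 2) *: N by rewrite /w addrAC subrr add0r.
  rewrite /nrm ip_scale2 NN mulr1 sqrtr_sqr ger0_norm; last by rewrite divr_ge0 // ltW.
  lra.
have Tw : tcone Om R w.
  apply: subset_closure.
  exists (fun s : K => R + s *: w), eps0; split.
  - by split => //; rewrite scale0r addr0.
  - by rewrite (@lin_D K n R w 0).2.
  - move=> t _; apply: ACT_add => //; exact: ACT_scale.
  - by move=> t /andP[t0 te]; apply: He => //; rewrite t0 te.
  - move=> t _; split; first by apply: diff_derivable; exact: (@lin_D K n R w t).1.
    have -> : 'D_1 (fun s : K => R + s *: w) = cst w.
      by apply/funext => s; rewrite (@lin_D K n R w s).2.
    exact: cst_continuous.
have := Htc w Tw.
rewrite /w addrC ip_lin NN mulr1.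
lra.
Qed.
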